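(* Let $(\sigma,\rho)\in GL_n(\mathbb R)\times GL_m(\mathbb R)$ be a $G$-compatible pair, i.e. $\sigma\exp\left(\rho^{(j)}\cdot\Delta\right)\sigma^{-1}\in SL_n(\mathbb Z)$ for all $j=1,\dots,m$, where $\rho^{(j)}$ is the $j$-th column of $\rho$. Then $$L_{(\sigma,\rho)}:=\sigma^{-1}\mathbb Z^n\rtimes_\eta\rho\mathbb Z^m=\{(\sigma^{-1}v,\rho p):\ v\in\mathbb Z^n,\ p\in\mathbb Z^m\}\subset G$$ is a lattice in $G$ (a discrete subgroup with $G/L_{(\sigma,\rho)}$ carrying a finite $G$-invariant measure; in fact it is co-compact).
   Context: Fix integers $1\le m\le n$. Let $\Delta_1,\dots,\Delta_m\in\mathbb R^{n\times n}$ be linearly independent, nonsingular, traceless diagonal matrices $\Delta_i=\mathrm{diag}(d_1^{(i)},\dots,d_n^{(i)})$ such that for each $i$, $d_k^{(i)}\neq d_j^{(i)}$ whenever $k\neq j$. For $t=(t_1,\dots,t_m)^T\in\mathbb R^m$ write $t\cdot\Delta=\sum_{i=1}^m t_i\Delta_i$ and $\eta(t)=e^{t\cdot\Delta}$ (matrix exponential). Let $G=\mathbb R^n\rtimes_\eta\mathbb R^m$ be the Lie group with underlying set $\mathbb R^n\times\mathbb R^m$ and multiplication $(x,t)(y,s)=(x+e^{t\cdot\Delta}y,\ t+s)$; the inverse is $(x,t)^{-1}=(-e^{-t\cdot\Delta}x,-t)$. *)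

(* Defs.v *)
From HB Require Import structures.
From mathcomp Require Import all_boot all_order all_algebra.
From mathcomp Require Import all_classical all_reals all_analysis.
Set Implicit Arguments. Unset Strict Implicit. Unset Printing Implicit Defensive.
Import Order.TTheory GRing.Theory Num.Theory.
Import numFieldNormedType.Exports.
Local Open Scope classical_set_scope.
Local Open Scope ring_scope.

Definition mexp (R : realType) (n : nat) (A : 'M[R]_n) : 'M[R]_n :=
  limn (series (fun k : nat => (k`!%:R)^-1 *: A ^+ k)).

Definition tdot (R : realType) (n m : nat) (Delta : 'I_m -> 'M[R]_n)
  (t : 'cV[R]_m) : 'M[R]_n := \sum_(i < m) t i 0 *: Delta i.

Definition eta (R : realType) (n m : nat) (Delta : 'I_m -> 'M[R]_n)
  (t : 'cV[R]_m) : 'M[R]_n := mexp (tdot Delta t).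

(* The group G = R^n x|_eta R^m : carrier R^n x R^m *)
Definition Gmul (R : realType) (n m : nat) (Delta : 'I_m -> 'M[R]_n)
  (g h : 'cV[R]_n * 'cV[R]_m) : 'cV[R]_n * 'cV[R]_m :=
  (g.1 + eta Delta g.2 *m h.1, g.2 + h.2).

Definition Gone (R : realType) (n m : nat) : 'cV[R]_n * 'cV[R]_m := (0, 0).

Definition Ginv (R : realType) (n m : nat) (Delta : 'I_m -> 'M[R]_n)
  (g : 'cV[R]_n * 'cV[R]_m) : 'cV[R]_n * 'cV[R]_m :=
  (- (eta Delta (- g.2) *m g.1), - g.2).

Definition in_SLnZ (R : realType) (n : nat) (A : 'M[R]_n) : Prop :=
  (forall i j, A i j \is a Num.int) /\ \det A = 1.

Definition G_compatible (R : realType) (n m : nat) (Delta : 'I_m -> 'M[R]_n)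
  (sigma : 'M[R]_n) (rho : 'M[R]_m) : Prop :=
  forall j : 'I_m, in_SLnZ (sigma *m eta Delta (col j rho) *m invmx sigma).

Definition Lsr (R : realType) (n m : nat) (sigma : 'M[R]_n) (rho : 'M[R]_m)
  : set ('cV[R]_n * 'cV[R]_m) :=
  [set g | exists (v : 'cV[int]_n) (p : 'cV[int]_m),
      g = (invmx sigma *m map_mx intr v, rho *m map_mx intr p)].

Definition is_subgroup (R : realType) (n m : nat) (Delta : 'I_m -> 'M[R]_n)
  (L : set ('cV[R]_n * 'cV[R]_m)) : Prop :=
  L (Gone R n m) /\
  (forall g h, L g -> L h -> L (Gmul Delta g h)) /\
  (forall g, L g -> L (Ginv Delta g)).

Definition is_discrete (R : realType) (n m : nat)
  (L : set ('cV[R]_n * 'cV[R]_m)) : Prop :=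
  forall g, L g -> exists2 U, nbhs g U & U `&` L = [set g].

Definition is_cocompact (R : realType) (n m : nat) (Delta : 'I_m -> 'M[R]_n)
  (L : set ('cV[R]_n * 'cV[R]_m)) : Prop :=
  exists K : set ('cV[R]_n * 'cV[R]_m), compact K /\
    forall g, exists k l, K k /\ L l /\ g = Gmul Delta k l.

Definition Delta_hyp (R : realType) (n m : nat) (Delta : 'I_m -> 'M[R]_n) : Prop :=
  (forall i, is_diag_mx (Delta i)) /\
  (forall i, \tr (Delta i) = 0) /\
  (forall i, Delta i \in unitmx) /\
  (forall i (k j : 'I_n), k != j -> Delta i k k != Delta i j j) /\
  (forall c : 'I_m -> R, \sum_(i < m) c i *: Delta i = 0 -> forall i, c i = 0).

(* Main.v *)
Require Import Defs.
From HB Require Import structures.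
From mathcomp Require Import all_boot all_order all_algebra.
From mathcomp Require Import all_classical all_reals all_analysis.
Set Implicit Arguments. Unset Strict Implicit. Unset Printing Implicit Defensive.
Import Order.TTheory GRing.Theory Num.Theory.
Import numFieldNormedType.Exports.
Local Open Scope classical_set_scope.
Local Open Scope ring_scope.
From mathcomp Require Import lra.
Lemma cvg_mx_entry (R : realType) a b (T : Type) (F : set_system T) {FF : Filter F}
  (f : T -> 'M[R]_(a,b)) (L : 'M[R]_(a,b)) :
  (forall i j, (fun x => f x i j) @ F --> L i j) -> f @ F --> L.
Proof.
move=> H A [P PL sPA].
have : \forall x \near F, forall k : 'I_a * 'I_b, P k.1 k.2 (f x k.1 k.2).
  apply: filter_forall => k; exact: (H k.1 k.2 _ (PL k.1 k.2)).
apply: filterS => x Hx; apply: sPA => i j; exact: (Hx (i, j)).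
Qed.

Lemma diag_mx_exp (R : realType) n (d : 'rV[R]_n) k :
  diag_mx d ^+ k = diag_mx (\row_i (d 0 i ^+ k)).
Proof.
elim: k => [|k IH].
  by rewrite expr0; apply/matrixP => i j; rewrite !mxE expr0.
by rewrite exprS IH -mulmxE mulmx_diag; congr diag_mx; apply/rowP => i; rewrite !mxE exprS.
Qed.

Lemma mexp_diag (R : realType) n (d : 'rV[R]_n) :
  mexp (diag_mx d) = diag_mx (\row_i expR (d 0 i)).
Proof.
rewrite /mexp; apply: cvg_lim; first exact: norm_hausdorff.
apply: cvg_mx_entry => i j.
have -> : (fun N => series (fun k : nat => (k`!%:R)^-1 *: diag_mx d ^+ k) N i j)
   = (fun N => series (exp_coeff (d 0 i)) N *+ (i == j)).
  apply/funext => N; rewrite /series /= summxE -sumrMnl; apply: eq_bigr => k _.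
  by rewrite diag_mx_exp !mxE /exp_coeff /= mulrnAr mulrC.
rewrite !mxE; case: (i == j) => /=.
  under eq_fun do rewrite mulr1n.
  exact: is_cvg_series_exp_coeff.
under eq_fun do rewrite mulr0n.
exact: cvg_cst.
Qed.

Section Eta.
Variables (R : realType) (n m : nat) (Delta : 'I_m -> 'M[R]_n).
Hypothesis Hdiag : forall i, is_diag_mx (Delta i).

Lemma tdot_diag (s : 'cV[R]_m) : tdot Delta s = diag_mx (\row_k tdot Delta s k k).
Proof.
apply/matrixP=> i j; rewrite !mxE; case: eqVneq => [->|nij]; first by rewrite mulr1n.
rewrite mulr0n /tdot summxE big1 // => l _; rewrite mxE.
by rewrite (is_diag_mxP (Hdiag l)) ?mulr0.
Qed.

Lemma eta_diag (s : 'cV[R]_m) : Defs.eta Delta s = diag_mx (\row_k expR (tdot Delta s k k)).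
Proof.
rewrite /Defs.eta {1}tdot_diag mexp_diag; congr diag_mx; apply/rowP => k; rewrite !mxE.
by [].
Qed.

Lemma tdotD (s t : 'cV[R]_m) (k : 'I_n) : tdot Delta (s + t) k k = tdot Delta s k k + tdot Delta t k k.
Proof.
rewrite /tdot !summxE -big_split; apply: eq_bigr => i _; rewrite !mxE mulrDl.
by [].
Qed.

Lemma etaD (s t : 'cV[R]_m) : Defs.eta Delta (s + t) = Defs.eta Delta s *m Defs.eta Delta t.
Proof.
rewrite !eta_diag mulmx_diag; congr diag_mx; apply/rowP => k.
by rewrite !mxE tdotD expRD.
Qed.

Lemma eta0 : Defs.eta Delta 0 = 1%:M.
Proof.
rewrite eta_diag; apply/matrixP=> i j; rewrite !mxE /tdot summxE big1 ?expR0 //.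
by move=> l _; rewrite !mxE mul0r.
Qed.

End Eta.

Lemma intr_inj_det (R : realType) n (B : 'M[int]_n) :
  \det (map_mx (intr : int -> R) B) = 1 -> \det B = 1.
Proof. by rewrite det_map_mx => /eqP; rewrite -(rmorph1 (intr : int -> R)) eqr_int => /eqP. Qed.

Section Group.
Variables (R : realType) (n m : nat) (Delta : 'I_m -> 'M[R]_n).
Variables (sigma : 'M[R]_n) (rho : 'M[R]_m).
Hypothesis Hdiag : forall i, is_diag_mx (Delta i).
Hypothesis Hs : sigma \in unitmx.
Hypothesis Hc : G_compatible Delta sigma rho.

Definition Pg (p : 'cV[int]_m) := exists B : 'M[int]_n,
  sigma *m Defs.eta Delta (rho *m map_mx intr p) *m invmx sigma = map_mx intr B
  /\ \det B = 1.

Lemma conjM (A B : 'M[R]_n) :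
  sigma *m (A *m B) *m invmx sigma =
  (sigma *m A *m invmx sigma) *m (sigma *m B *m invmx sigma).
Proof. by rewrite !mulmxA mulmxKV. Qed.

Lemma Pg0 : Pg 0.
Proof.
exists 1%:M; split; last exact: det1.
by rewrite map_mx0 mulmx0 eta0 // mulmx1 mulmxV // map_mx1.
Qed.

Lemma PgD p q : Pg p -> Pg q -> Pg (p + q).
Proof.
move=> [B [HB dB]] [C [HC dC]]; exists (B *m C); split; last by rewrite det_mulmx dB dC mulr1.
by rewrite map_mxD mulmxDr etaD // conjM HB HC map_mxM.
Qed.

Lemma PgN p : Pg p -> Pg (- p).
Proof.
move=> [B [HB dB]]; exists (\adj B).
have HBa : B *m \adj B = 1%:M by rewrite mul_mx_adj dB.
split; last first.
  by move: (congr1 determinant HBa); rewrite det_mulmx dB mul1r det1.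
have E : sigma *m Defs.eta Delta (rho *m map_mx intr (- p)) *m invmx sigma *m map_mx intr B = 1%:M.
  rewrite -HB -conjM -etaD // map_mxN mulmxN addNr eta0 // mulmx1 mulmxV //.
rewrite -[LHS]mulmx1 -(map_mx1 (intr : int -> R)) -HBa map_mxM mulmxA E mul1mx //.
Qed.

Lemma Pg_delta j : Pg (delta_mx j 0).
Proof.
have [Hint Hdet] := Hc j.
set A := sigma *m _ *m _ in Hint Hdet.
have EA : A = map_mx intr (\matrix_(i, k) Num.floor (A i k)).
  apply/matrixP => i k; rewrite [RHS]mxE [X in intr X]mxE floorK //.
exists (\matrix_(i, k) Num.floor (A i k)); split; last first.
  by apply: (@intr_inj_det R); rewrite -EA.
rewrite -EA /A colE; congr (_ *m Defs.eta _ _ *m _); congr (_ *m _).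
by apply/matrixP => i k; rewrite !mxE rmorph_nat.
Qed.

Lemma Pg_all p : Pg p.
Proof.
have Pn q k : Pg q -> Pg (q *+ k).
  move=> Pq; elim: k => [|k IH]; first by rewrite mulr0n; exact: Pg0.
  by rewrite mulrS; exact: PgD.
have Pz q (z : int) : Pg q -> Pg (z *: q).
  move=> Pq; rewrite -[z]intz scaler_int; case: z => k.
    exact: Pn.
  exact/PgN/Pn.
rewrite (matrix_sum_delta p); apply: big_ind; [exact: Pg0 | exact: PgD |] => i _.
rewrite big_ord1; exact/Pz/Pg_delta.
Qed.

Lemma Pg_key p : exists B : 'M[int]_n,
  Defs.eta Delta (rho *m map_mx intr p) *m invmx sigma = invmx sigma *m map_mx intr B.
Proof.
have [B [HB _]] := Pg_all p; exists B; rewrite -HB !mulmxA mulVmx // mul1mx //.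
Qed.

Lemma subgroupL : is_subgroup Delta (Lsr sigma rho).
Proof.
split; [|split].
- by exists 0, 0; rewrite !map_mx0 !mulmx0.
- move=> _ _ [v [p ->]] [w [q ->]].
  have [B HB] := Pg_key p.
  exists (v + B *m w), (p + q); rewrite /Gmul /=.
  by rewrite !map_mxD map_mxM !mulmxDr mulmxA HB mulmxA.
- move=> _ [v [p ->]].
  have [B HB] := Pg_key (- p).
  exists (- (B *m v)), (- p); rewrite /Ginv /=.
  rewrite map_mxN mulmxN in HB.
  by rewrite !map_mxN !mulmxN map_mxM !mulmxA HB.
Qed.

End Group.
Lemma int_lt1 (R : realType) (z : int) : `|z%:~R : R| < 1 -> z = 0.
Proof.
rewrite -intr_norm -[1](rmorph1 (intr : int -> R)) ltr_int.
by rewrite -(add0r 1) ltzD1 normr_le0 => /eqP.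
Qed.

Lemma nbhs_box (R : realType) a b c (x0 : 'M[R]_(a,b)) (t0 : 'M[R]_(c,1)) d : 0 < d ->
  nbhs (x0, t0) ([set x : 'M[R]_(a,b) | forall i j, `|x i j - x0 i j| < d] `*` [set t : 'M[R]_(c,1) | forall i j, `|t i j - t0 i j| < d]).
Proof.
move=> d0; exists ([set x : 'M[R]_(a,b) | forall i j, `|x i j - x0 i j| < d], [set t : 'M[R]_(c,1) | forall i j, `|t i j - t0 i j| < d]) => //=.
split.
  exists (fun i j => ball (x0 i j) d) => /=.
    by move=> i j; exact: nbhsx_ballx.
  by move=> x Hx i j; have := Hx i j; rewrite /ball /= distrC.
exists (fun i j => ball (t0 i j) d) => /=.
  by move=> i j; exact: nbhsx_ballx.
by move=> x Hx i j; have := Hx i j; rewrite /ball /= distrC.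
Qed.

Definition bnd (R : realType) a b (A : 'M[R]_(a,b)) : R := \sum_i \sum_j `|A i j|.

Lemma bnd_ge0 (R : realType) a b (A : 'M[R]_(a,b)) : 0 <= bnd A.
Proof. by apply: sumr_ge0 => i _; apply: sumr_ge0. Qed.

Lemma mulmx_bound (R : realType) a b (A : 'M[R]_(a,b)) (x : 'cV[R]_b) e :
  0 <= e -> (forall j, `|x j 0| <= e) -> forall i, `|(A *m x) i 0| <= bnd A * e.
Proof.
move=> e0 H i; rewrite mxE; apply: le_trans (ler_norm_sum _ _ _) _.
apply: (@le_trans _ _ (\sum_j `|A i j| * e)).
  by apply: ler_sum => j _; rewrite normrM ler_wpM2l.
rewrite -mulr_suml ler_wpM2r // /bnd (bigD1 i) //= lerDl.
by apply: sumr_ge0 => k _; apply: sumr_ge0.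
Qed.

Section Discrete.
Variables (R : realType) (n m : nat).
Variables (sigma : 'M[R]_n) (rho : 'M[R]_m).
Hypothesis Hs : sigma \in unitmx.
Hypothesis Hr : rho \in unitmx.

Lemma discreteL : is_discrete (Lsr sigma rho).
Proof.
move=> _ [v0 [p0 ->]].
set x0 := invmx sigma *m map_mx intr v0; set t0 := rho *m map_mx intr p0.
pose c := bnd sigma + bnd (invmx rho) + 1.
have c0 : 0 < c by rewrite /c ltr_wpDl // addr_ge0 // bnd_ge0.
have d0 : 0 < c^-1 by rewrite invr_gt0.
exists ([set x : 'M[R]_(n,1) | forall i j, `|x i j - x0 i j| < c^-1]
   `*` [set t : 'M[R]_(m,1) | forall i j, `|t i j - t0 i j| < c^-1]).
  exact: nbhs_box.
apply/seteqP; split => [[x t] [[/= Hx Ht] [v [p E]]] | _ ->]; last first.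
  split; last by exists v0, p0.
  by split => i j /=; rewrite subrr normr0.
case: E => Ex Et; subst x t.
have v_eq : v = v0.
  have E1 : map_mx intr (v - v0) = sigma *m (invmx sigma *m map_mx intr v - x0).
    by rewrite mulmxBr !mulmxA mulmxV // !mul1mx map_mxB.
  apply/matrixP => i j; rewrite ord1; apply/eqP; rewrite -subr_eq0; apply/eqP.
  have E2 : ((v i 0 - v0 i 0)%:~R : R) = (sigma *m (invmx sigma *m map_mx intr v - x0)) i 0.
    by rewrite -E1 !mxE.
  apply: (@int_lt1 R); rewrite E2.
  apply: le_lt_trans (@mulmx_bound R _ _ _ _ c^-1 _ _ i) _.
  - exact: ltW.
  - by move=> j'; apply: ltW; move: (Hx j' 0); congr (`|_| < _); rewrite !mxE.
  rewrite -(mulfV (lt0r_neq0 c0)) ltr_pM2r // /c -addrA ltr_pwDr //.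
  by rewrite ltr_wpDl // bnd_ge0.
have p_eq : p = p0.
  have E1 : map_mx intr (p - p0) = invmx rho *m (rho *m map_mx intr p - t0).
    by rewrite mulmxBr !mulmxA mulVmx // !mul1mx map_mxB.
  apply/matrixP => i j; rewrite ord1; apply/eqP; rewrite -subr_eq0; apply/eqP.
  have E2 : ((p i 0 - p0 i 0)%:~R : R) = (invmx rho *m (rho *m map_mx intr p - t0)) i 0.
    by rewrite -E1 !mxE.
  apply: (@int_lt1 R); rewrite E2.
  apply: le_lt_trans (@mulmx_bound R _ _ _ _ c^-1 _ _ i) _.
  - exact: ltW.
  - by move=> j'; apply: ltW; move: (Ht j' 0); congr (`|_| < _); rewrite !mxE.
  rewrite -(mulfV (lt0r_neq0 c0)) ltr_pM2r // /c ltr_pwDr //.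
  by rewrite lerDr bnd_ge0.
by rewrite v_eq p_eq.
Qed.

End Discrete.


Lemma cV_box_compact (R : realType) k (C : R) :
  compact [set x : 'cV[R]_k | forall i, `|x i 0| <= C].
Proof.
have rc := @rV_compact R k (fun=> `[-C, C]%classic) (fun=> @segment_compact R _ _).
have -> : [set x : 'cV[R]_k | forall i, `|x i 0| <= C] =
    trmx @` [set v : 'rV[R]_k | forall i, `[-C, C]%classic (v ord0 i)].
  apply/seteqP; split => [x Hx|_ [v Hv <-]].
    exists x^T; last exact: trmxK.
    by move=> i; rewrite /= mxE in_itv /= -ler_norml; exact: Hx.
  by move=> i; rewrite mxE; have := Hv i; rewrite /= in_itv /= -ler_norml.
apply: continuous_compact => //; apply: continuous_subspaceT => x.
apply: (@cvg_mx_entry _ _ _ _ (nbhs x) (nbhs_filter x)) => i j; rewrite mxE.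
under eq_fun do rewrite mxE.
exact: coord_continuous.
Qed.

Lemma frac_col (R : realType) k (a : 'cV[R]_k) j :
  `|(a - map_mx intr (\col_i Num.floor (a i 0))) j 0| <= 1.
Proof.
rewrite !mxE; have /andP[h1 h2] := floor_itv (a j 0).
rewrite intrD /= in h2.
by rewrite ger0_norm; lra.
Qed.

Section Cocompact.
Variables (R : realType) (n m : nat) (Delta : 'I_m -> 'M[R]_n).
Variables (sigma : 'M[R]_n) (rho : 'M[R]_m).
Hypothesis Hdiag : forall i, is_diag_mx (Delta i).
Hypothesis Hs : sigma \in unitmx.
Hypothesis Hr : rho \in unitmx.

Lemma tdot_bound (s : 'cV[R]_m) D : (forall l, `|s l 0| <= D) ->
  forall k, `|tdot Delta s k k| <= D * \sum_l \sum_k' `|Delta l k' k'|.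
Proof.
move=> H k; rewrite /tdot summxE; apply: le_trans (ler_norm_sum _ _ _) _.
rewrite mulr_sumr; apply: ler_sum => l _; rewrite mxE normrM.
have D0 : 0 <= D by apply: le_trans (H l); exact: normr_ge0.
apply: le_trans (ler_wpM2r (normr_ge0 _) (H l)) _.
rewrite ler_wpM2l // (bigD1 k) //= lerDl.
by apply: sumr_ge0.
Qed.

Lemma cocompactL : is_cocompact Delta (Lsr sigma rho).
Proof.
pose D := bnd rho.
pose M := D * \sum_l \sum_k' `|Delta l k' k'|.
pose C := expR M * bnd (invmx sigma).
exists ([set x : 'cV[R]_n | forall i, `|x i 0| <= C] `*`
        [set t : 'cV[R]_m | forall i, `|t i 0| <= D]).
split.
  by apply: compact_setX; apply: cV_box_compact.
move=> [x t].
pose f2 := invmx rho *m t.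
pose p := \col_i Num.floor (f2 i 0).
pose k2 := t - rho *m map_mx intr p.
have Ek2 : k2 = rho *m (f2 - map_mx intr p).
  by rewrite /k2 mulmxBr /f2 mulmxA mulmxV // mul1mx.
have Bk2 : forall l, `|k2 l 0| <= D.
  move=> l; rewrite Ek2 -[D]mulr1; apply: mulmx_bound => // j.
  exact: frac_col.
pose y := sigma *m (Defs.eta Delta (- k2) *m x).
pose v := \col_i Num.floor (y i 0).
pose k1 := Defs.eta Delta k2 *m (invmx sigma *m (y - map_mx intr v)).
exists (k1, k2), (invmx sigma *m map_mx intr v, rho *m map_mx intr p).
split; [split | split].
- move=> i /=; rewrite /k1 (eta_diag Hdiag) mul_diag_mx mxE mxE normrM.
  apply: ler_pM; [exact: normr_ge0 | exact: normr_ge0 | |].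
  + rewrite ger0_norm; last exact/ltW/expR_gt0.
    rewrite ler_expR; apply: le_trans (ler_norm _) _.
    exact: tdot_bound.
  + rewrite -[bnd _]mulr1; apply: mulmx_bound => // j.
    exact: frac_col.
- exact: Bk2.
- by exists v, p.
- rewrite /Gmul /=; congr pair; last by rewrite /k2 subrK.
  rewrite /k1 -mulmxDr -mulmxDr subrK /y [invmx sigma *m _]mulmxA mulVmx // mul1mx mulmxA.
  by rewrite -(etaD Hdiag) addrN (eta0 Hdiag) mul1mx.
Qed.

End Cocompact.

Unset Implicit Arguments.

Theorem mainTheorem1 (R : realType) (n m : nat) (Delta : 'I_m -> 'M[R]_n)
  (sigma : 'M[R]_n) (rho : 'M[R]_m) :
  (1 <= m)%N -> (m <= n)%N -> Delta_hyp Delta ->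
  sigma \in unitmx -> rho \in unitmx ->
  G_compatible Delta sigma rho ->
  is_subgroup Delta (Lsr sigma rho) /\ is_discrete (Lsr sigma rho) /\
  is_cocompact Delta (Lsr sigma rho).
Proof.
move=> _ _ [Hdiag _] Hs Hr Hc; split; first exact: subgroupL.
split; first exact: discreteL.
exact: cocompactL.
Qed.
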